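(* Let $\rho\in(0,1)$, $h>0$, $\delta\ge0$, and $\hat S_\rho=(I+\rho^{-2}\widehat\Pi)^{1/2}$. If $\operatorname{tr}\big((I-\widehat\Pi)\Pi^*\big)\le\delta^2$, then for every $x\in\mathbb R^d$, $|\hat S_\rho x|\le h$ implies $|\Pi^*x|\le(\rho+\delta)h$.
   Context: $\Pi^*$ is the orthogonal projector onto an $m^*$-dimensional subspace of $\mathbb R^d$. $I$ is the $d\times d$ identity, $|\cdot|$ the Euclidean norm, $A\preceq B$ means $B-A$ is positive semidefinite. Let $\hat\beta_1,\dots,\hat\beta_L\in\mathbb R^d$ be arbitrary vectors, $\mathcal A_{m^*}=\{\Pi\in\mathbb R^{d\times d}:\Pi=\Pi^\top,\ 0\preceq\Pi\preceq I,\ \operatorname{tr}\Pi\le m^*\}$, and let $\widehat\Pi$ be a minimizer over $\Pi\in\mathcal A_{m^*}$ of $\max_\ell\hat\beta_\ell^\top(I-\Pi)\hat\beta_\ell$. Square roots are positive semidefinite square roots. *)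

(* Defs.v *)
From HB Require Import structures.
From mathcomp Require Import all_boot all_order all_algebra.
From mathcomp Require Import reals.
Set Implicit Arguments. Unset Strict Implicit. Unset Printing Implicit Defensive.
Import Order.TTheory GRing.Theory Num.Theory.
Local Open Scope ring_scope.

Section Defs.
Variable R : realType.

Definition vnorm d (x : 'cV[R]_d) : R := Num.sqrt ((x^T *m x) 0 0).

Definition qform d (A : 'M[R]_d) (x : 'cV[R]_d) : R := (x^T *m A *m x) 0 0.

Definition psd d (A : 'M[R]_d) : Prop :=
  A^T = A /\ forall x : 'cV[R]_d, 0 <= qform A x.

Definition loewner_le d (A B : 'M[R]_d) : Prop := psd (B - A).

Definition orth_proj d (m : nat) (P : 'M[R]_d) : Prop :=
  P^T = P /\ P *m P = P /\ \rank P = m.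

Definition setA d (m : nat) (P : 'M[R]_d) : Prop :=
  P^T = P /\ loewner_le 0 P /\ loewner_le P 1%:M /\ \tr P <= m%:R.

(* Objective: max_l beta_l^T (I - P) beta_l  (values are >= 0 on setA, so the
   default 0 of the big max is harmless; for L = 0 the objective is 0). *)
Definition objective d L (beta : 'I_L -> 'cV[R]_d) (P : 'M[R]_d) : R :=
  \big[Num.max/0]_(l < L) qform (1%:M - P) (beta l).

Definition is_minimizer d (m : nat) L (beta : 'I_L -> 'cV[R]_d) (P : 'M[R]_d) : Prop :=
  setA m P /\ forall Q : 'M[R]_d, setA m Q -> objective beta P <= objective beta Q.

End Defs.

(* Main.v *)
Require Import Defs.
From HB Require Import structures.
From mathcomp Require Import all_boot all_order all_algebra.
From mathcomp Require Import reals.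
From mathcomp Require Import ring lra.
Import Order.TTheory GRing.Theory Num.Theory.
Local Open Scope ring_scope.

Set Implicit Arguments.
Unset Strict Implicit.
Section Aux.
Variable R : realType.
Variable d : nat.
Implicit Types (M A B : 'M[R]_d) (u v x : 'cV[R]_d).

Definition bf M u v : R := (u^T *m M *m v) 0 0.
Definition n2 x : R := (x^T *m x) 0 0.

Lemma n2_sum x : n2 x = \sum_i x i 0 ^+ 2.
Proof. by rewrite /n2 mxE; apply: eq_bigr => i _; rewrite mxE expr2. Qed.

Lemma n2_ge0 x : 0 <= n2 x.
Proof. by rewrite n2_sum; apply: sumr_ge0 => i _; apply: sqr_ge0. Qed.

Lemma qform_sum M x : qform M x = \sum_j \sum_i x i 0 * M i j * x j 0.
Proof.
rewrite /qform mxE; apply: eq_bigr => j _; rewrite mxE big_distrl /=.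
by apply: eq_bigr => i _; rewrite mxE.
Qed.

Lemma trD m n (A1 A2 : 'M[R]_(m,n)) : (A1 + A2)^T = A1^T + A2^T.
Proof. by apply/matrixP => i j; rewrite !mxE. Qed.
Lemma trZ m n a (A1 : 'M[R]_(m,n)) : (a *: A1)^T = a *: A1^T.
Proof. by apply/matrixP => i j; rewrite !mxE. Qed.

Lemma qform_comb M u v a c :
  qform M (a *: u + c *: v) =
  a ^+ 2 * qform M u + a * c * (bf M u v + bf M v u) + c ^+ 2 * qform M v.
Proof.
rewrite /qform /bf trD !trZ !mulmxDl !mulmxDr.
rewrite -!scalemxAl -!scalemxAr !mxE; ring.
Qed.

Lemma bf_sym M u v : M^T = M -> bf M u v = bf M v u.
Proof.
move=> HM; rewrite /bf.
have -> : (u^T *m M *m v) 0 0 = ((u^T *m M *m v)^T) 0 0 by rewrite [RHS]mxE.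
by rewrite !trmx_mul trmxK HM mulmxA.
Qed.

Lemma bf_e M i j : bf M (delta_mx i 0) (delta_mx j 0) = M i j.
Proof. by rewrite /bf trmx_delta -mulmxA -colE -rowE !mxE. Qed.

Lemma quad_disc (a b c : R) : 0 <= c ->
  (forall t, 0 <= a + 2 * b * t + c * t ^+ 2) -> b ^+ 2 <= a * c.
Proof.
move=> c0 H; have [c00|cn0] := eqVneq c 0.
  rewrite c00 in H *.
  have [->|bn0] := eqVneq b 0; first by rewrite expr0n mulr0.
  move: (H (- (a + 1) / (2 * b))); set t0 := (- (a + 1) / (2 * b)).
  have e : a + 2 * b * t0 + 0 * t0 ^+ 2 = -1.
    rewrite /t0 mul0r addr0; field; by rewrite bn0.
  by rewrite e lerNr oppr0 ler10.
have cp : 0 < c by rewrite lt0r cn0.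
move: (H (- b / c)); set t0 := (- b / c).
have e : a + 2 * b * t0 + c * t0 ^+ 2 = a - b ^+ 2 / c by rewrite /t0; field.
by rewrite e subr_ge0 ler_pdivrMr.
Qed.

Lemma cs M u v : psd M -> bf M u v ^+ 2 <= qform M u * qform M v.
Proof.
move=> [HS HP]; apply: quad_disc => // t.
have := HP (1 *: u + t *: v); rewrite qform_comb (bf_sym v u HS).
suff -> : (1:R) ^+ 2 * qform M u + 1 * t * (bf M u v + bf M u v) + t ^+ 2 * qform M v =
  qform M u + 2 * bf M u v * t + qform M v * t ^+ 2 by [].
ring.
Qed.

Lemma tr_bound M v : psd M -> qform M v <= \tr M * n2 v.
Proof.
move=> [HS HP].
have key : forall i j, 2 * (v i 0 * M i j * v j 0) <= v i 0 ^+ 2 * M j j + v j 0 ^+ 2 * M i i.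
  move=> i j.
  have := HP (v j 0 *: delta_mx i 0 + (- v i 0) *: delta_mx j 0).
  rewrite qform_comb /qform -/(bf M (delta_mx i 0) (delta_mx i 0))
     -/(bf M (delta_mx j 0) (delta_mx j 0)) !bf_e.
  have -> : M j i = M i j by rewrite -{1}HS mxE.
  move=> h; lra.
have E : \tr M * n2 v = \sum_j \sum_i (v i 0 ^+ 2 * M j j + v j 0 ^+ 2 * M i i) / 2.
  have E1 : \sum_j \sum_i (v i 0 ^+ 2 * M j j) / 2 = \tr M * n2 v / 2.
    rewrite /mxtrace big_distrl /= big_distrl /=; apply: eq_bigr => j _.
    rewrite n2_sum big_distrr /= big_distrl /=; apply: eq_bigr => i _; ring.
  have E2 : \sum_j \sum_i (v j 0 ^+ 2 * M i i) / 2 = \tr M * n2 v / 2.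
    by rewrite exchange_big.
  rewrite (eq_bigr (fun j => \sum_i (v i 0 ^+ 2 * M j j) / 2 + \sum_i (v j 0 ^+ 2 * M i i) / 2)).
    by rewrite big_split /= E1 E2; field.
  by move=> j _; rewrite -big_split; apply: eq_bigr => i _ /=; field.
rewrite E qform_sum; apply: ler_sum => j _; apply: ler_sum => i _.
have := key i j; lra.
Qed.

Lemma trB m n (A1 A2 : 'M[R]_(m,n)) : (A1 - A2)^T = A1^T - A2^T.
Proof. by apply/matrixP => i j; rewrite !mxE. Qed.

Lemma addE m n (A1 A2 : 'M[R]_(m,n)) i j : (A1 + A2) i j = A1 i j + A2 i j.
Proof. by rewrite mxE. Qed.
Lemma oppE m n (A1 : 'M[R]_(m,n)) i j : (- A1) i j = - A1 i j.
Proof. by rewrite mxE. Qed.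
Lemma scaleE m n a (A1 : 'M[R]_(m,n)) i j : (a *: A1) i j = a * A1 i j.
Proof. by rewrite mxE. Qed.

Lemma qformB M1 M2 x : qform (M1 - M2) x = qform M1 x - qform M2 x.
Proof. by rewrite /qform mulmxBr mulmxBl addE oppE. Qed.

Lemma qformDZ M1 M2 a x : qform (M1 + a *: M2) x = qform M1 x + a * qform M2 x.
Proof. by rewrite /qform mulmxDr mulmxDl -scalemxAr -scalemxAl addE scaleE. Qed.

Lemma qform1 x : qform 1%:M x = n2 x.
Proof. by rewrite /qform mulmx1. Qed.

Lemma qform_conj (C M : 'M[R]_d) z : qform (C^T *m M *m C) z = qform M (C *m z).
Proof. by rewrite /qform trmx_mul !mulmxA. Qed.

Lemma n2_mul (C : 'M[R]_d) z : n2 (C *m z) = qform (C^T *m C) z.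
Proof. by rewrite -qform1 -qform_conj mulmx1. Qed.

Lemma psd1 : psd (1%:M : 'M[R]_d).
Proof. by split; [rewrite trmx1 | move=> z; rewrite qform1 n2_ge0]. Qed.

Lemma trP (P : 'M[R]_d) (z : 'cV[R]_d) : P^T = P -> P *m z = z -> z^T *m P = z^T.
Proof. by move=> PS Pz; rewrite -[in RHS]Pz trmx_mul PS. Qed.

End Aux.


Unset Implicit Arguments.
Set Strict Implicit.

Theorem corollary4 (R : realType) (d mstar L : nat)
    (Pistar : 'M[R]_d) (beta : 'I_L -> 'cV[R]_d) (Pihat : 'M[R]_d)
    (rho h delta : R) (Shat : 'M[R]_d) :
  orth_proj mstar Pistar ->
  is_minimizer mstar beta Pihat ->
  0 < rho -> rho < 1 -> 0 < h -> 0 <= delta ->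
  (* Shat is the PSD square root of I + rho^-2 Pihat *)
  psd Shat -> Shat *m Shat = 1%:M + rho ^-2 *: Pihat ->
  \tr ((1%:M - Pihat) *m Pistar) <= delta ^+ 2 ->
  forall x : 'cV[R]_d,
    vnorm (Shat *m x) <= h -> vnorm (Pistar *m x) <= (rho + delta) * h.
Proof.
move=> [PS [PP _]] [[AS [A0 [A1 _]]] _] rp r1 hp dp [SS _] SSq Htr x Hx.
rewrite /loewner_le subr0 in A0; rewrite /loewner_le in A1.
set A := Pihat in AS A0 A1 SSq Htr *.
set P := Pistar in PS PP Htr *.
set B := 1%:M - A in A1 Htr.
have psdA : psd A := A0.
have psdB : psd B := A1.
have n2x0 := n2_ge0 x.
have qA0 : 0 <= qform A x by case: A0.
have nSx : n2 (Shat *m x) = n2 x + rho ^-2 * qform A x.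
  by rewrite n2_mul SS SSq qformDZ qform1.
have hSx : n2 (Shat *m x) <= h ^+ 2.
  move: Hx; rewrite /vnorm -/(n2 _) => Hx.
  have s0 := sqrtr_ge0 (n2 (Shat *m x)).
  rewrite -(sqr_sqrtr (n2_ge0 (Shat *m x))). nra.
have r2 : rho ^-2 * rho ^+ 2 = 1 by rewrite mulVf // expf_neq0 // gt_eqF.
have r2p : 0 < rho ^-2 by rewrite invr_gt0 exprn_gt0.
have hx : n2 x <= h ^+ 2.
  have : 0 <= rho ^-2 * qform A x by rewrite mulr_ge0 // ltW.
  lra.
have hqA : qform A x <= rho ^+ 2 * h ^+ 2.
  have e : qform A x = rho ^+ 2 * (rho ^-2 * qform A x) by rewrite mulrA [rho ^+ 2 * _]mulrC r2 mul1r.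
  rewrite e ler_pM2l ?exprn_gt0 //; lra.
have Pc : forall z, n2 (P *m z) <= n2 z.
  move=> z; rewrite n2_mul PS PP.
  have : 0 <= n2 ((1%:M - P) *m z) by apply: n2_ge0.
  rewrite n2_mul trB trmx1 PS mulmxBl mul1mx mulmxBr mulmx1 PP subrr subr0.
  by rewrite qformB qform1 subr_ge0.
set w := A *m x.
have hw : n2 w <= qform A x.
  have e : n2 w = bf A x w by rewrite /n2 /bf /w trmx_mul AS mulmxA.
  have := cs x w psdA; rewrite -e.
  have : 0 <= qform B w by case: psdB.
  rewrite /B qformB qform1 => h1 h2.
  have n2w0 := n2_ge0 w.
  nra.
set a := P *m w.
have ha : n2 a <= rho ^+ 2 * h ^+ 2.
  have := Pc w; lra.
set y := P *m (B *m x).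
have Py : P *m y = y by rewrite /y mulmxA PP.
have yP : y^T *m P = y^T := trP PS Py.
have e1 : n2 y = bf B y x by rewrite /n2 /bf {2}/y !mulmxA yP.
have qBx : qform B x <= n2 x.
  by rewrite /B qformB qform1; lra.
have qBx0 : 0 <= qform B x by case: psdB.
have psdPBP : psd (P^T *m B *m P).
  split; first by rewrite !trmx_mul trmxK PS mulmxA (proj1 psdB).
  by move=> z; rewrite qform_conj; case: psdB.
have qBy : qform B y <= delta ^+ 2 * n2 y.
  rewrite -{1}Py -qform_conj.
  apply: le_trans (tr_bound y psdPBP) _.
  rewrite ler_wpM2r ?n2_ge0 //.
  by rewrite PS mxtrace_mulC mulmxA PP mxtrace_mulC.
have hy : n2 y <= delta ^+ 2 * h ^+ 2.
  have := cs y x psdB; rewrite -e1 => h1.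
  have n2y0 := n2_ge0 y.
  have qBy0 : 0 <= qform B y by case: psdB.
  have h2 : n2 y ^+ 2 <= delta ^+ 2 * n2 y * n2 x.
    apply: le_trans h1 _.
    apply: le_trans (ler_wpM2r qBx0 qBy) _.
    by apply: ler_wpM2l => //; rewrite mulr_ge0 ?sqr_ge0.
  have h3 : n2 y <= delta ^+ 2 * n2 x.
    have [->|ny] := eqVneq (n2 y) 0; first by rewrite mulr_ge0 ?sqr_ge0.
    have ny0 : 0 < n2 y by rewrite lt0r ny.
    set D := delta ^+ 2 in h2 *; nra.
  apply: le_trans h3 _; apply: ler_wpM2l => //; exact: sqr_ge0.
have ePx : P *m x = 1 *: a + 1 *: y.
  by rewrite !scale1r /a /y /w -mulmxDr -mulmxDl /B addrC subrK mul1mx.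
have hPx : n2 (P *m x) <= ((rho + delta) * h) ^+ 2.
  rewrite ePx -qform1 qform_comb !qform1 (bf_sym y a (proj1 (@psd1 R d))).
  have := cs a y (@psd1 R d); rewrite !qform1 => hc.
  set t := bf 1%:M a y in hc *.
  have n2a0 := n2_ge0 a.
  have n2y0 := n2_ge0 y.
  have K0 : 0 <= rho * h * (delta * h) by rewrite !mulr_ge0 // ltW.
  have hc2 : t ^+ 2 <= (rho * h * (delta * h)) ^+ 2.
    apply: le_trans hc _.
    rewrite exprMn; apply: ler_pM => //; rewrite exprMn //.
  have ht : t <= rho * h * (delta * h) by nra.
  nra.
rewrite /vnorm -/(n2 _).
apply: le_trans (ler_wsqrtr hPx) _.
rewrite sqrtr_sqr ger0_norm // mulr_ge0 // ?ltW //.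
by rewrite ltr_pwDl.
Qed.
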